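(* For every constant $B>0$, any number of training samples $n\ge1$ and any time $t\ge1$, with probability at least $1-\frac1{c_1}$ over the random initialization, the empirical Rademacher complexity satisfies $$\frac1n\mathbb{E}_{\xi\in\{\pm1\}^n}\Big[\sup_{\max_{r\in[m]}\|w_{i,r}^{(t)}\|_2,\,|b_{i,r}^{(t)}|\le B}\ \sum_{j=1}^n\xi_jN\big((x_{1:i})_j;\theta^{(t)}_i\big)\Big]\le\frac{8c_1\epsilon_aBm\sqrt{2\log m}}{\sqrt n},$$ where $(x_{1:i})_j$ denotes the first $i$ coordinates of the $j$-th training example.
   Context: Fix $m\ge2$, $\epsilon_a>0$, a constant $c_1>10$, $i\in[d]$, and training points $x^{(1)},\dots,x^{(n)}\in\mathbb{R}^d$ with $\|x^{(j)}\|_2\le1$. For $\|x_{1:i}\|_2\le1$, $\hat x_{1:i}=(x_1,\dots,x_i,\sqrt{1-\|x_{1:i}\|_2^2})$. Random frozen initial parameters $a_{i,r}\sim\mathcal N(0,\epsilon_a^2)$, $\bar w_{i,r}\sim\mathcal N(0,\frac1mI_{i+1})$, $\bar b_{i,r}\sim\mathcal N(0,\frac1m)$, independent. $N(x_{1:i};\theta_i)=\sum_{r=1}^ma_{i,r}\max\{0,\langle\bar w_{i,r}+w_{i,r},\hat x_{1:i}\rangle+\bar b_{i,r}+b_{i,r}\}$ with offsets $\theta_i=(w_{i,r},b_{i,r})_r$; the supremum is over all offsets $\theta_i^{(t)}=(w^{(t)}_{i,r},b^{(t)}_{i,r})_r$ satisfying the stated bounds. $\xi$ is uniform on $\{\pm1\}^n$.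 *)

(* Defs.v *)
From HB Require Import structures.
From mathcomp Require Import all_boot all_order all_algebra.
From mathcomp Require Import all_classical all_reals all_analysis.
Set Implicit Arguments. Unset Strict Implicit. Unset Printing Implicit Defensive.
Import Order.TTheory GRing.Theory Num.Theory.
Local Open Scope classical_set_scope.
Local Open Scope ring_scope.

Section defs.
Context {R : realType}.

Definition norm2 k (v : 'rV[R]_k) : R := Num.sqrt (\sum_(l < k) v 0 l ^+ 2).

Definition dotv k (u v : 'rV[R]_k) : R := \sum_(l < k) u 0 l * v 0 l.

Definition xprefix d i (hid : (i <= d)%N) (x : 'rV[R]_d) : 'rV[R]_i :=
  \row_(l < i) x 0 (widen_ord hid l).

Definition xhat i (x : 'rV[R]_i) : 'rV[R]_(i + 1) :=
  row_mx x (const_mx (Num.sqrt (1 - norm2 x ^+ 2))).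

(* N(x_{1:i}; theta_i) with frozen init (a, wb, bb) and offsets (w, b) *)
Definition netN m i (a : 'I_m -> R) (wb : 'I_m -> 'rV[R]_(i + 1)) (bb : 'I_m -> R)
  (w : 'I_m -> 'rV[R]_(i + 1)) (b : 'I_m -> R) (x : 'rV[R]_i) : R :=
  \sum_(r < m) a r * Num.max 0 (dotv (wb r + w r) (xhat x) + bb r + b r).

Definition rsign (s : bool) : R := if s then 1 else -1.

(* n * (empirical Rademacher complexity): E_xi [ sup_theta sum_j xi_j N(x_j; theta) ],
   xi uniform on {+-1}^n, sup over offsets with max_r |w_r|_2 <= B and |b_r| <= B *)
Definition rad_sum n m i (a : 'I_m -> R) (wb : 'I_m -> 'rV[R]_(i + 1)) (bb : 'I_m -> R)
  (B : R) (X : 'I_n -> 'rV[R]_i) : R :=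
  (2 ^+ n)^-1 * \sum_(xi : {ffun 'I_n -> bool})
    sup [set y | exists (w : 'I_m -> 'rV[R]_(i + 1)) (b : 'I_m -> R),
           (forall r, norm2 (w r) <= B /\ `|b r| <= B) /\
           y = \sum_(j < n) rsign (xi j) * netN a wb bb w b (X j)].

Definition mutually_independent d (T : measurableType d) (P : probability T R)
  (I : finType) (Z : I -> T -> R) : Prop :=
  forall A : I -> set R, (forall k, measurable (A k)) ->
    P (\bigcap_(k in [set: I]) (Z k @^-1` A k)) = (\prod_(k : I) P (Z k @^-1` A k))%E.

(* Z is a real random variable with law N(mu, sigma^2) (sigma = standard deviation) *)
Definition is_normal_rv d (T : measurableType d) (P : probability T R)
  (Z : T -> R) (mu sigma : R) : Prop :=
  measurable_fun setT Z /\
  forall A : set R, measurable A -> P (Z @^-1` A) = normal_prob mu sigma A.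

(* The combined family of all scalar initialization variables:
   inl (r, 0) |-> a_r, inl (r, 1) |-> bb_r, inr (r, k) |-> (wb_r)_k *)
Definition init_family d (T : measurableType d) m i
  (a bb : 'I_m -> T -> R) (wb : 'I_m -> 'I_(i + 1) -> T -> R)
  (p : ('I_m * 'I_2) + ('I_m * 'I_(i + 1))) : T -> R :=
  match p with
  | inl (r, k) => if nat_of_ord k == 0%N then a r else bb r
  | inr (r, k) => wb r k
  end.

End defs.

(* Main.v *)
Require Import Defs.
From HB Require Import structures.
From mathcomp Require Import all_boot all_order all_algebra.
From mathcomp Require Import all_classical all_reals all_analysis.
From mathcomp Require Import ring lra measurable_realfun.
Import Order.TTheory GRing.Theory Num.Theory.
Local Open Scope classical_set_scope.
Local Open Scope ring_scope.
Set Implicit Arguments. Unset Strict Implicit. Unset Printing Implicit Defensive.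
Section Signs.
Context {R : realType}.

Definition flipk n (k : 'I_n) (xi : {ffun 'I_n -> bool}) : {ffun 'I_n -> bool} :=
  [ffun j => if j == k then ~~ xi j else xi j].

Lemma flipkK n k : involutive (@flipk n k).
Proof. by move=> xi; apply/ffunP => j; rewrite !ffunE; case: eqP => // ->; rewrite negbK. Qed.

Lemma sum_flip n k (F : {ffun 'I_n -> bool} -> R) :
  \sum_xi F xi = \sum_xi F (flipk k xi).
Proof. exact: (reindex_inj (inv_inj (@flipkK n k))). Qed.

Lemma rsign_flip n (k : 'I_n) xi j : @rsign R (flipk k xi j) = if j == k then - rsign (xi j) else rsign (xi j).
Proof. by rewrite /flipk ffunE; case: eqP => // _; case: (xi j); rewrite /rsign /= ?opprK. Qed.

Lemma rsign_sq b : @rsign R b * rsign b = 1.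
Proof. by case: b; rewrite /rsign ?mulr1 ?mulrNN ?mulr1. Qed.

Lemma card_xi n : \sum_(xi : {ffun 'I_n -> bool}) (1 : R) = 2 ^+ n.
Proof. by rewrite sumr_const card_ffun card_bool card_ord natrX. Qed.

Lemma sum_rsign n (k : 'I_n) : \sum_(xi : {ffun 'I_n -> bool}) @rsign R (xi k) = 0.
Proof.
set S := \sum_xi _.
have h : S = - S.
  rewrite {1}/S (sum_flip k) -sumrN; apply: eq_bigr => xi _.
  by rewrite rsign_flip eqxx.
by apply/eqP; rewrite -[S == 0](mulrn_eq0 S 2) mulr2n {2}h subrr.
Qed.

Lemma sum_rsign2 n (j k : 'I_n) :
  \sum_(xi : {ffun 'I_n -> bool}) @rsign R (xi j) * rsign (xi k) =
  if j == k then 2 ^+ n else 0.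
Proof.
case: eqP => [-> | /eqP jk].
  by rewrite -card_xi; apply: eq_bigr => xi _; rewrite rsign_sq.
set S := \sum_xi _.
have h : S = - S.
  rewrite {1}/S (sum_flip j) -sumrN; apply: eq_bigr => xi _.
  by rewrite !rsign_flip eqxx eq_sym (negbTE jk) mulNr.
by apply/eqP; rewrite -[S == 0](mulrn_eq0 S 2) mulr2n {2}h subrr.
Qed.

Lemma sum_lin n (c : 'I_n -> R) :
  \sum_(xi : {ffun 'I_n -> bool}) \sum_j rsign (xi j) * c j = 0.
Proof.
rewrite exchange_big big1 // => j _.
by rewrite -mulr_suml sum_rsign mul0r.
Qed.

Lemma sum_sq n (c : 'I_n -> R) :
  \sum_(xi : {ffun 'I_n -> bool}) (\sum_j rsign (xi j) * c j) ^+ 2 =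
  2 ^+ n * \sum_j c j ^+ 2.
Proof.
transitivity (\sum_(xi : {ffun 'I_n -> bool}) \sum_j \sum_k (rsign (xi j) * rsign (xi k)) * (c j * c k)).
  apply: eq_bigr => xi _; rewrite expr2 mulr_suml; apply: eq_bigr => j _.
  rewrite mulr_sumr; apply: eq_bigr => k _; ring.
rewrite exchange_big mulr_sumr; apply: eq_bigr => j _.
rewrite exchange_big (bigD1 j) //=.
rewrite -mulr_suml sum_rsign2 eqxx expr2 big1 ?addr0 //.
move=> k kj; rewrite -mulr_suml sum_rsign2.
by rewrite eq_sym (negbTE kj) mul0r.
Qed.

End Signs.
Section CS.
Context {R : realType}.

Lemma cs_sq k (u v : 'rV[R]_k) :
  dotv u v ^+ 2 <= (\sum_l u 0 l ^+ 2) * (\sum_l v 0 l ^+ 2).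
Proof.
set A := \sum_l _; set B := \sum_l _; rewrite /dotv; set C := \sum_l _.
have A0 : 0 <= A by apply: sumr_ge0 => l _; exact: sqr_ge0.
have B0 : 0 <= B by apply: sumr_ge0 => l _; exact: sqr_ge0.
have [Bz|Bp] := eqVneq B 0.
  have vz : forall l, v 0 l = 0.
    move=> l; apply/eqP; rewrite -sqrf_eq0; apply/eqP.
    by move/psumr_eq0P : Bz => -> // l' _; exact: sqr_ge0.
  rewrite /C big1 ?Bz ?expr0n ?mulr0 // => l _; by rewrite vz mulr0.
have Bgt : 0 < B by rewrite lt_def Bp B0.
have h : 0 <= \sum_l (B * u 0 l - C * v 0 l) ^+ 2.
  by apply: sumr_ge0 => l _; exact: sqr_ge0.
have e : \sum_l (B * u 0 l - C * v 0 l) ^+ 2 = B * (A * B - C ^+ 2).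
  transitivity (\sum_l ((B ^+ 2) * u 0 l ^+ 2 - (2 * B * C) * (u 0 l * v 0 l) + C ^+ 2 * v 0 l ^+ 2)).
    by apply: eq_bigr => l _; ring.
  rewrite big_split big_split /= -!mulr_sumr sumrN -mulr_sumr -/A -/B -/C; ring.
rewrite e in h.
have : 0 <= A * B - C ^+ 2 by rewrite -(pmulr_rge0 _ Bgt).
by rewrite subr_ge0.
Qed.

Lemma cs_abs k (u v : 'rV[R]_k) : `|dotv u v| <= norm2 u * norm2 v.
Proof.
rewrite /norm2 -sqrtrM; last by apply: sumr_ge0 => l _; exact: sqr_ge0.
by rewrite -sqrtr_sqr ler_wsqrtr // cs_sq.
Qed.

Lemma cs_le k (u v : 'rV[R]_k) : dotv u v <= norm2 u * norm2 v.
Proof. exact: le_trans (ler_norm _) (cs_abs u v). Qed.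

Lemma norm2_ge0 k (u : 'rV[R]_k) : 0 <= norm2 u.
Proof. exact: sqrtr_ge0. Qed.

Lemma norm2_sq k (u : 'rV[R]_k) : norm2 u ^+ 2 = \sum_l u 0 l ^+ 2.
Proof. by rewrite /norm2 sqr_sqrtr //; apply: sumr_ge0 => l _; exact: sqr_ge0. Qed.

Lemma dotvDl k (u w v : 'rV[R]_k) : dotv (u + w) v = dotv u v + dotv w v.
Proof. by rewrite /dotv -big_split; apply: eq_bigr => l _; rewrite mxE mulrDl. Qed.

End CS.
Section Contraction.
Context {R : realType} (Th : Type) (K : set Th) (n : nat) (t : 'I_n -> Th -> R)
  (M : 'I_n -> R) (L : R).
Hypotheses (K0 : K !=set0) (hM : forall th j, K th -> `|t j th| <= M j) (L0 : 0 <= L).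

Definition Sset (f : 'I_n -> R -> R) (xi : {ffun 'I_n -> bool}) : set R :=
  [set y | exists th, K th /\ y = \sum_j rsign (xi j) * f j (t j th)].

Definition lip (g : R -> R) := forall x y, `|g x - g y| <= L * `|x - y|.

Lemma lip_lin : lip (fun x => L * x).
Proof. by move=> x y; rewrite -mulrBr normrM ger0_norm. Qed.

Lemma rsign_norm (b : bool) : `|@rsign R b| = 1.
Proof. by case: b; rewrite /rsign ?normrN normr1. Qed.

Lemma Sset_has_sup f (xi : {ffun 'I_n -> bool}) : (forall j, lip (f j)) -> has_sup (Sset f xi).
Proof.
move=> hf; split.
  by case: K0 => th Kth; exists (\sum_j rsign (xi j) * f j (t j th)); exists th.
exists (\sum_j (`|f j 0| + L * M j)) => y [th [Kth ->]].
apply: le_trans (ler_norm _) _; apply: le_trans (ler_norm_sum _ _ _) _.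
apply: ler_sum => j _; rewrite normrM rsign_norm mul1r.
have h1 := hf j (t j th) 0; rewrite subr0 in h1.
have h2 : `|f j (t j th)| <= `|f j 0| + `|f j (t j th) - f j 0|.
  by rewrite -{1}(subrK (f j 0) (f j (t j th))) addrC ler_normD.
apply: le_trans h2 _; rewrite lerD2l; apply: le_trans h1 _.
by rewrite ler_wpM2l // hM.
Qed.

Lemma Sset_le f (xi : {ffun 'I_n -> bool}) th : (forall j, lip (f j)) -> K th ->
  \sum_j rsign (xi j) * f j (t j th) <= sup (Sset f xi).
Proof.
move=> hf Kth; apply: ub_le_sup; first by case: (Sset_has_sup xi hf).
by exists th.
Qed.

Section Step.
Variable k : 'I_n.

Lemma decomp (f : 'I_n -> R -> R) (xi : {ffun 'I_n -> bool}) th : \sum_j rsign (xi j) * f j (t j th) =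
  rsign (xi k) * f k (t k th) + \sum_(j | j != k) rsign (xi j) * f j (t j th).
Proof. by rewrite (bigD1 k). Qed.

Lemma decomp_flip (f : 'I_n -> R -> R) (xi : {ffun 'I_n -> bool}) th : \sum_j rsign (flipk k xi j) * f j (t j th) =
  - rsign (xi k) * f k (t k th) + \sum_(j | j != k) rsign (xi j) * f j (t j th).
Proof.
rewrite (bigD1 k) //= rsign_flip eqxx; congr (_ + _).
by apply: eq_bigr => j jk; rewrite rsign_flip (negbTE jk).
Qed.

Variables f g : 'I_n -> R -> R.
Hypotheses (hf : forall j, lip (f j)) (hg : forall j, lip (g j))
  (fg : forall j, j != k -> f j =1 g j) (gk : g k =1 (fun x => L * x)).

Lemma pair_le xi :
  sup (Sset f xi) + sup (Sset f (flipk k xi)) <=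
  sup (Sset g xi) + sup (Sset g (flipk k xi)).
Proof.
set C := sup (Sset g xi) + sup (Sset g (flipk k xi)).
pose G th := \sum_(j | j != k) rsign (xi j) * f j (t j th).
have GG th : G th = \sum_(j | j != k) rsign (xi j) * g j (t j th).
  by apply: eq_bigr => j jk; rewrite fg.
pose s : R := rsign (xi k).
have s2 : s * s = 1 by exact: rsign_sq.
have sn : `|s| = 1 by exact: rsign_norm.
have yg1 th : K th -> s * (L * t k th) + G th <= sup (Sset g xi).
  move=> Kth; have := Sset_le xi hg Kth; by rewrite decomp gk -GG.
have yg2 th : K th -> - s * (L * t k th) + G th <= sup (Sset g (flipk k xi)).
  move=> Kth; have := Sset_le (flipk k xi) hg Kth; by rewrite decomp_flip gk -GG.
have key th1 th2 : K th1 -> K th2 ->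
    (s * f k (t k th1) + G th1) + (- s * f k (t k th2) + G th2) <= C.
  move=> K1 K2.
  set a := t k th1; set b := t k th2.
  have h1 : s * (f k a - f k b) <= L * `|a - b|.
    apply: le_trans (ler_norm _) _; rewrite normrM sn mul1r; exact: hf.
  have e : `|a - b| = `|s * (a - b)| by rewrite normrM sn mul1r.
  have [hp|hn] := lerP 0 (s * (a - b)).
    rewrite e ger0_norm // in h1.
    apply: le_trans (lerD (yg1 _ K1) (yg2 _ K2)).
    suff : s * f k a - s * f k b <= s * (L * a) - s * (L * b) by rewrite !mulNr -/a -/b; lra.
    have -> : s * (L * a) - s * (L * b) = L * (s * (a - b)) by ring.
    by rewrite -mulrBr.
  rewrite e ltr0_norm // in h1.
  apply: le_trans (lerD (yg1 _ K2) (yg2 _ K1)).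
  suff : s * f k a - s * f k b <= s * (L * b) - s * (L * a) by rewrite !mulNr -/a -/b; lra.
  have -> : s * (L * b) - s * (L * a) = L * (- (s * (a - b))) by ring.
  by rewrite -mulrBr.
have ne1 : Sset f xi !=set0 by case: (Sset_has_sup xi hf).
have ne2 : Sset f (flipk k xi) !=set0 by case: (Sset_has_sup (flipk k xi) hf).
suff : sup (Sset f (flipk k xi)) <= C - sup (Sset f xi) by lra.
apply: ge_sup => // y2 [th2 [K2 ->]].
suff : sup (Sset f xi) <= C - \sum_j rsign (flipk k xi j) * f j (t j th2) by lra.
apply: ge_sup => // y1 [th1 [K1 ->]].
have := key _ _ K1 K2; rewrite /G decomp decomp_flip -/s; lra.
Qed.

Lemma sum_step :
  \sum_xi sup (Sset f xi) <= \sum_xi sup (Sset g xi).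
Proof.
have e (F : {ffun 'I_n -> bool} -> R) :
    \sum_xi F xi = (\sum_xi (F xi + F (flipk k xi))) / 2.
  by rewrite big_split /= -(sum_flip k); field.
rewrite (e (fun xi => sup (Sset f xi))) (e (fun xi => sup (Sset g xi))).
by rewrite ler_pM2r // ler_sum // => xi _; exact: pair_le.
Qed.

End Step.

Lemma contraction (phi : 'I_n -> R -> R) : (forall j, lip (phi j)) ->
  \sum_xi sup (Sset phi xi) <= \sum_xi sup (Sset (fun _ x => L * x) xi).
Proof.
move=> hphi.
pose mix k := fun j : 'I_n => if (j < k)%N then (fun x => L * x) else phi j.
have hmix k j : lip (mix k j).
  by rewrite /mix; case: ifP => _; [exact: lip_lin | exact: hphi].
have m0 : mix 0%N = phi by apply/funext => j.
have mn : mix n = (fun _ x => L * x) by apply/funext => j; rewrite /mix ltn_ord.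
suff H : forall k, (k <= n)%N -> \sum_xi sup (Sset (mix 0%N) xi) <= \sum_xi sup (Sset (mix k) xi).
  by have := H n (leqnn n); rewrite m0 mn.
elim => [|k IH] kn; first exact: lexx.
apply: le_trans (IH (ltnW kn)) _.
apply: (@sum_step (Ordinal kn)) => // [j jk x|x].
  have jk' : (nat_of_ord j != k).
    by move: jk; apply: contra => /eqP e; apply/eqP/val_inj.
  by rewrite /mix [(j < k.+1)%N]ltnS [(j <= k)%N]leq_eqVlt (negbTE jk').
by rewrite /mix /= ltnSn.
Qed.

End Contraction.
Section Aux.
Context {R : realType}.

Lemma max0_lip (x y : R) : `|Num.max 0 x - Num.max 0 y| <= `|x - y|.
Proof.
have h1 : x - y <= `|x - y| by exact: ler_norm.
have h2 : y - x <= `|x - y| by rewrite distrC; exact: ler_norm.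
rewrite ler_norml; move: h1 h2; set N := `|x - y|.
rewrite /Order.max; case: ifP => hx; case: ifP => hy; move=> h1 h2; apply/andP; split; lra.
Qed.

Lemma dotv_sum k n (w : 'rV[R]_k) (c : 'I_n -> R) (h : 'I_n -> 'rV[R]_k) :
  \sum_j c j * dotv w (h j) = dotv w (\sum_j c j *: h j).
Proof.
rewrite /dotv; under eq_bigr do rewrite mulr_sumr.
rewrite exchange_big /=; apply: eq_bigr => l _.
rewrite summxE mulr_sumr; apply: eq_bigr => j _; rewrite mxE; ring.
Qed.

Lemma avg_abs n (x : {ffun 'I_n -> bool} -> R) : (1 <= n)%N ->
  (forall xi, 0 <= x xi) ->
  \sum_xi x xi ^+ 2 <= 2 ^+ n * n%:R ->
  \sum_xi x xi <= 2 ^+ n * Num.sqrt n%:R.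
Proof.
move=> n1 x0 hsq.
set s := Num.sqrt n%:R.
have s0 : 0 < s by rewrite sqrtr_gt0 ltr0n.
have ss : s ^+ 2 = n%:R by rewrite sqr_sqrtr // ler0n.
have h xi : x xi <= (x xi ^+ 2 + s ^+ 2) / (2 * s).
  rewrite ler_pdivlMr ?mulr_gt0 //.
  have : 0 <= (x xi - s) ^+ 2 by exact: sqr_ge0.
  rewrite sqrrB; lra.
apply: le_trans (ler_sum _ (fun xi _ => h xi)) _.
rewrite -mulr_suml big_split /= sumr_const card_ffun card_bool card_ord.
rewrite ler_pdivrMr ?mulr_gt0 //.
rewrite ss -[_ *+ _]mulr_natr natrX.
have -> : 2 ^+ n * s * (2 * s) = 2 * (2 ^+ n * s ^+ 2) by rewrite expr2; ring.
rewrite ss; lra.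
Qed.

Lemma avg_norm n k (h : 'I_n -> 'rV[R]_k) : (1 <= n)%N ->
  (forall j, norm2 (h j) <= 1) ->
  \sum_(xi : {ffun 'I_n -> bool}) norm2 (\sum_j rsign (xi j) *: h j) <= 2 ^+ n * Num.sqrt n%:R.
Proof.
move=> n1 hh; apply: avg_abs => // [xi|]; first exact: norm2_ge0.
rewrite (_ : \sum_xi _ = \sum_(xi : {ffun 'I_n -> bool}) \sum_l (\sum_j rsign (xi j) * h j 0 l) ^+ 2); last first.
  apply: eq_bigr => xi _; rewrite norm2_sq; apply: eq_bigr => l _.
  by rewrite summxE; congr (_ ^+ 2); apply: eq_bigr => j _; rewrite mxE.
rewrite exchange_big /=.
under eq_bigr do rewrite sum_sq.
rewrite -mulr_sumr ler_pM2l ?exprn_gt0 // exchange_big /=.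
rewrite -[n in n%:R]card_ord -sumr_const; apply: ler_sum => j _.
rewrite -norm2_sq; have := norm2_ge0 (h j); have := hh j; set u := norm2 _.
move=> h1 h2; rewrite expr2; nra.
Qed.

Lemma avg_sign n : (1 <= n)%N ->
  \sum_(xi : {ffun 'I_n -> bool}) `|\sum_j @rsign R (xi j)| <= 2 ^+ n * Num.sqrt n%:R.
Proof.
move=> n1; apply: avg_abs => //.
under eq_bigr do rewrite real_normK ?num_real //.
rewrite (eq_bigr (fun xi : {ffun 'I_n -> bool} => (\sum_j rsign (xi j) * (fun _ => (1 : R)) j) ^+ 2)); last first.
  by move=> xi _; congr (_ ^+ 2); apply: eq_bigr => j _; rewrite mulr1.
rewrite sum_sq; under eq_bigr do rewrite expr1n.
by rewrite sumr_const card_ord mulr_natr.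
Qed.

End Aux.
Section Det.
Context {R : realType}.

Lemma norm2_0 k : norm2 (0 : 'rV[R]_k) = 0.
Proof. by rewrite /norm2 big1 ?sqrtr0 // => l _; rewrite mxE expr0n. Qed.

Lemma det_bound m i n (a : 'I_m -> R) (wb : 'I_m -> 'rV[R]_(i + 1)) (bb : 'I_m -> R)
  (B : R) (X : 'I_n -> 'rV[R]_i) :
  (1 <= n)%N -> 0 <= B -> (forall j, norm2 (xhat (X j)) <= 1) ->
  rad_sum a wb bb B X <= \sum_r `|a r| * (2 * B * Num.sqrt n%:R).
Proof.
move=> n1 B0 hX.
pose h j := xhat (X j).
pose K := fun p : 'rV[R]_(i + 1) * R => norm2 p.1 <= B /\ `|p.2| <= B.
pose tt r (j : 'I_n) (p : 'rV[R]_(i + 1) * R) := dotv (wb r + p.1) (h j) + bb r + p.2.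
pose phi r (j : 'I_n) (x : R) := a r * Num.max 0 x.
pose MM r (j : 'I_n) := `|dotv (wb r) (h j)| + B + `|bb r| + B.
have K0 : K !=set0 by exists (0, 0); rewrite /K /= norm2_0 normr0.
have hM r th j : K th -> `|tt r j th| <= MM r j.
  case=> hw hb; rewrite /tt /MM dotvDl.
  apply: le_trans (ler_normD _ _) _; apply: lerD => //.
  apply: le_trans (ler_normD _ _) _; apply: lerD => //.
  apply: le_trans (ler_normD _ _) _; apply: lerD => //.
  apply: le_trans (cs_abs _ _) _.
  by rewrite -[B]mulr1 ler_pM // ?norm2_ge0 // hX.
have L0 r : 0 <= `|a r| by exact: normr_ge0.
have hphi r j : lip `|a r| (phi r j).
  by move=> x y; rewrite /phi -mulrBr normrM ler_wpM2l // max0_lip.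
have sa (xi : {ffun 'I_n -> bool}) :
    sup [set y | exists (w : 'I_m -> 'rV[R]_(i + 1)) (b : 'I_m -> R),
           (forall r, norm2 (w r) <= B /\ `|b r| <= B) /\
           y = \sum_(j < n) rsign (xi j) * netN a wb bb w b (X j)]
    <= \sum_r sup (Sset K (tt r) (phi r) xi).
  apply: ge_sup.
    exists (\sum_(j < n) rsign (xi j) * netN a wb bb (fun _ => 0) (fun _ => 0) (X j)).
    exists (fun _ => 0), (fun _ => 0); split => // r.
    by rewrite norm2_0 normr0.
  move=> y [w [b [hwb ->]]].
  rewrite /netN; under eq_bigr do rewrite mulr_sumr.
  rewrite exchange_big /=; apply: ler_sum => r _.
  exact: (Sset_le K0 (hM r) (L0 r) xi (th := (w r, b r)) (hphi r) (hwb r)).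
have sc r (xi : {ffun 'I_n -> bool}) :
    sup (Sset K (tt r) (fun _ x => `|a r| * x) xi) <=
    `|a r| * (\sum_j rsign (xi j) * (dotv (wb r) (h j) + bb r) +
              B * norm2 (\sum_j rsign (xi j) *: h j) + B * `|\sum_j @rsign R (xi j)|).
  apply: ge_sup.
    by case: (Sset_has_sup K0 (hM r) (L0 r) xi (fun j => lip_lin (L0 r))).
  move=> y [[w b] [[/= hw hb] ->]].
  rewrite /tt /=.
  have -> : \sum_j rsign (xi j) * (`|a r| * (dotv (wb r + w) (h j) + bb r + b)) =
      `|a r| * (\sum_j rsign (xi j) * (dotv (wb r) (h j) + bb r) +
                \sum_j rsign (xi j) * dotv w (h j) + b * \sum_j rsign (xi j)).
    rewrite [b * _]mulr_sumr -big_split -big_split /= mulr_sumr.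
    by apply: eq_bigr => j _; rewrite dotvDl; ring.
  rewrite ler_wpM2l // -!addrA lerD2l dotv_sum; apply: lerD.
    apply: le_trans (cs_le _ _) _.
    by rewrite ler_wpM2r // norm2_ge0.
  apply: le_trans (ler_norm _) _; rewrite normrM ler_wpM2r //.
rewrite /rad_sum.
have h2n : 0 < (2 : R) ^+ n by rewrite exprn_gt0.
rewrite ler_pdivrMl //.
apply: le_trans (ler_sum _ (fun xi _ => sa xi)) _.
rewrite exchange_big /= mulr_sumr; apply: ler_sum => r _.
apply: le_trans (contraction K0 (hM r) (L0 r) (hphi r)) _.
apply: le_trans (ler_sum _ (fun xi _ => sc r xi)) _.
rewrite -mulr_sumr big_split big_split /= sum_lin -!mulr_sumr add0r.
have := avg_norm (h:=h) n1 hX; have := @avg_sign R n n1.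
set s := Num.sqrt _; set A := \sum_xi _; set A' := \sum_xi _.
move=> hA hA'.
have s0 : 0 <= s by exact: sqrtr_ge0.
have : B * A' + B * A <= 2 ^+ n * (2 * B * s).
  have := ler_wpM2l B0 hA; have := ler_wpM2l B0 hA'; nra.
move=> H; rewrite mulrCA; apply: ler_wpM2l => //.
Qed.

End Det.
Section Xhat.
Context {R : realType}.

Lemma norm2_prefix d i (hid : (i <= d)%N) (x : 'rV[R]_d) :
  norm2 (xprefix hid x) <= norm2 x.
Proof.
rewrite /norm2 ler_wsqrtr //.
pose F (k : nat) : R := if insub k is Some l then x 0 l ^+ 2 else 0.
have FG (l : 'I_d) : F l = x 0 l ^+ 2 by rewrite /F valK.
have F0 k : 0 <= F k by rewrite /F; case: insub => // l; exact: sqr_ge0.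
rewrite (eq_bigr (fun l : 'I_i => F l)); last first.
  by move=> l _; rewrite mxE -(FG (widen_ord hid l)).
rewrite (@big_ord_widen R 0 +%R i d F hid).
under eq_bigr do rewrite FG.
rewrite [leRHS](bigID (fun l : 'I_d => (l < i)%N)) /=.
by rewrite lerDl; apply: sumr_ge0 => l _; exact: sqr_ge0.
Qed.

Lemma norm2_xhat i (y : 'rV[R]_i) : norm2 y <= 1 -> norm2 (xhat y) <= 1.
Proof.
move=> hy.
have n0 := norm2_ge0 y.
rewrite /norm2 big_split_ord /=.
under eq_bigr do rewrite /xhat row_mxEl.
under [X in _ + X]eq_bigr do rewrite /xhat row_mxEr mxE.
have c2 : Num.sqrt (1 - norm2 y ^+ 2) ^+ 2 = 1 - norm2 y ^+ 2.
  by rewrite sqr_sqrtr // subr_ge0 expr2; nra.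
rewrite -norm2_sq big_ord1 c2.
by rewrite addrC subrK sqrtr1.
Qed.

End Xhat.
Section Tail.
Context {R : realType}.

Lemma pdf_cmp (s K x : R) : 0 < s -> 0 <= K -> ~ (`[-K, K]%classic x) ->
  normal_pdf 0 s x <= Num.sqrt 2 * expR (- K ^+ 2 / (s ^+ 2 * 4)) * normal_pdf 0 (Num.sqrt 2 * s) x.
Proof.
move=> s0 K0 hx.
have s'0 : Num.sqrt 2 * s != 0 by rewrite mulf_neq0 ?gt_eqF ?sqrtr_gt0.
have s2 : (Num.sqrt 2 * s) ^+ 2 = 2 * s ^+ 2 by rewrite exprMn sqr_sqrtr.
rewrite /normal_pdf (negbTE s'0) gt_eqF //.
have pk : normal_peak s = Num.sqrt 2 * normal_peak (Num.sqrt 2 * s).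
  rewrite /normal_peak s2.
  have -> : 2 * s ^+ 2 * pi *+ 2 = 2 * (s ^+ 2 * pi *+ 2) by rewrite mulrnAr !mulrA.
  have a0 : 0 < s ^+ 2 * pi *+ 2 by rewrite mulrn_wgt0 // mulr_gt0 ?pi_gt0 // exprn_gt0.
  rewrite sqrtrM //.
  have h1 : Num.sqrt 2 != 0 :> R by rewrite gt_eqF // sqrtr_gt0.
  have h2 : Num.sqrt (s ^+ 2 * pi *+ 2) != 0 by rewrite gt_eqF // sqrtr_gt0.
  by field; rewrite h1 h2.
rewrite pk /normal_fun !subr0 s2.
set p := normal_peak _.
have p0 : 0 <= p by exact: normal_peak_ge0.
rewrite -!mulrA ler_wpM2l ?sqrtr_ge0 //.
rewrite mulrCA ler_wpM2l //.
rewrite -expRD ler_expR.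
have hK : K ^+ 2 <= x ^+ 2.
  have : K < `|x|.
    rewrite ltNge; apply/negP => hle; apply: hx.
    by rewrite /= in_itv /=; move: hle; rewrite ler_norml.
  move=> h; rewrite -[x ^+ 2]real_normK ?num_real // expr2 [x in _ <= x]expr2.
  by apply: ler_pM => //; exact: ltW.
have e1 : s ^+ 2 *+ 2 = 2 * s ^+ 2 by rewrite mulr_natl.
have e2 : (2 * s ^+ 2) *+ 2 = s ^+ 2 * 4 by rewrite -mulr_natl; ring.
rewrite e1 e2.
have ss : 0 < s ^+ 2 by exact: exprn_gt0.
have sn : s != 0 by rewrite gt_eqF.
have E : - K ^+ 2 / (s * (s * 4)) + - x ^+ 2 / (s ^+ 2 * 4) - (- x ^+ 2 / (2 * s ^+ 2))
    = (x ^+ 2 - K ^+ 2) / (s ^+ 2 * 4) by field; rewrite sn.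
rewrite -subr_ge0 E divr_ge0 ?subr_ge0 // mulr_ge0 // ltW //.
Qed.

End Tail.
Section Tail2.
Context {R : realType}.

Lemma normal_tail (s K : R) : 0 < s -> 0 <= K ->
  (normal_prob 0 s (~` `[(- K)%R, K]%classic) <= (Num.sqrt 2 * expR (- K ^+ 2 / (s ^+ 2 * 4)))%R%:E)%E.
Proof.
move=> s0 K0.
set c := (Num.sqrt 2 * _)%R.
have c0 : 0 <= c by rewrite mulr_ge0 ?sqrtr_ge0 ?expR_ge0.
have mA : measurable (~` `[-K, K]%classic : set R) by apply: measurableC.
set A := (~` _)%classic.
have H1 : (\int[lebesgue_measure]_(x in A) (normal_pdf 0 s x)%:E <= \int[lebesgue_measure]_(x in A) (c%:E * (normal_pdf 0 (Num.sqrt 2 * s) x)%:E))%E.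
  apply: ge0_le_integral => //.
  - by move=> x _; rewrite lee_fin normal_pdf_ge0.
  - apply/measurable_EFinP; apply: measurable_funS (measurable_normal_pdf 0 s) => //.
  - apply/measurable_EFinP; apply: measurable_funM => //.
    exact: measurable_funS (measurable_normal_pdf _ _).
  - by move=> x hx; rewrite -EFinM lee_fin; apply: pdf_cmp.
rewrite /normal_prob; apply: le_trans H1 _.
rewrite ge0_integralZl_EFin //.
- rewrite -[leRHS]mule1 /=; apply: lee_wpmul2l; first by rewrite lee_fin.
  exact: (probability_le1 (normal_prob 0 (Num.sqrt 2 * s)) mA).
- by move=> x _; rewrite lee_fin normal_pdf_ge0.
- apply/measurable_EFinP; exact: measurable_funS (measurable_normal_pdf _ _).
Qed.

End Tail2.
Section Event.
Context {R : realType}.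

Lemma union_bound d (T : measurableType d) (P : probability T R) (I : Type) (s : seq I)
  (F : I -> set T) : (forall i, measurable (F i)) ->
  (P (\big[setU/set0]_(i <- s) F i) <= \sum_(i <- s) P (F i))%E.
Proof.
move=> mF; elim: s => [|x s IH]; first by rewrite !big_nil measure0.
rewrite !big_cons; apply: le_trans (measureU2 _ _ _) _ => //.
  by apply: bigsetU_measurable => i _.
exact: leeD2l.
Qed.

Lemma event_bound d (T : measurableType d) (P : probability T R) m
  (a : 'I_m -> T -> R) (eps K : R) :
  (forall r, is_normal_rv P (a r) 0 eps) -> 0 < eps -> 0 <= K ->
  exists E : set T, measurable E /\
    ((1 - m%:R * (Num.sqrt 2 * expR (- K ^+ 2 / (eps ^+ 2 * 4))))%:E <= P E)%E /\
    forall om, E om -> forall r, `|a r om| <= K.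
Proof.
move=> ha e0 K0.
set c := (Num.sqrt 2 * _)%R.
pose A : set R := (~` `[(- K)%R, K]%classic).
have mA : measurable A by apply: measurableC.
pose Ac r := a r @^-1` A.
have mAc r : measurable (Ac r).
  by have := (ha r).1 measurableT A mA; rewrite setTI.
pose U := \big[setU/set0]_(r < m) Ac r.
have mU : measurable U by apply: bigsetU_measurable => r _.
exists (~` U); split; first exact: measurableC.
split; last first.
  move=> om hU r; rewrite leNgt; apply/negP => hlt; apply: hU.
  rewrite /U (bigD1 r) //=; left; rewrite /Ac /A /= in_itv /=.
  apply/negP; rewrite -ler_norml; by rewrite -ltNge.
rewrite probability_setC //.
have hPU : (P U <= (m%:R * c)%:E)%E.
  apply: le_trans (union_bound P _ mAc) _.
  apply: (@le_trans _ _ (\sum_(r < m) c%:E)%E).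
    apply: lee_sum => r _; rewrite /Ac (ha r).2 //; exact: normal_tail.
  by rewrite sumEFin sumr_const card_ord mulr_natl.
have fU : P U \is a fin_num by apply: fin_num_measure.
rewrite -(fineK fU) in hPU *; rewrite lee_fin in hPU.
by rewrite -EFinB lee_fin lerB.
Qed.

End Event.
Section Num.
Context {R : realType}.

Lemma ln_ge_half (m : nat) : (2 <= m)%N -> 1 / 2 <= ln (m%:R : R).
Proof.
move=> m2.
have m0 : (0 : R) < m%:R by rewrite ltr0n; apply: leq_trans m2.
have h := expR_ge1Dx (- ln (m%:R : R)).
rewrite expRN lnK ?posrE // in h.
have m2' : (2 : R) <= m%:R by rewrite ler_nat.
have : m%:R^-1 <= (2 : R)^-1 by rewrite lef_pV2 ?posrE.
lra.
Qed.

Lemma sqrt2_le2 : Num.sqrt (2 : R) <= 2.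
Proof.
have h : Num.sqrt (2 : R) ^+ 2 = 2 by rewrite sqr_sqrtr.
have h0 : 0 <= Num.sqrt (2 : R) by exact: sqrtr_ge0.
move: h h0; set s := Num.sqrt 2; rewrite expr2 => h h0; nra.
Qed.

Lemma numeric (m : nat) (c1 eps : R) : (2 <= m)%N -> 10 < c1 -> 0 < eps ->
  m%:R * (Num.sqrt 2 * expR (- (4 * c1 * eps * Num.sqrt (2 * ln m%:R)) ^+ 2 / (eps ^+ 2 * 4)))
  <= c1^-1.
Proof.
move=> m2 c10 e0.
set L := ln (m%:R : R).
have L2 := ln_ge_half m2; rewrite -/L in L2.
have m0 : (0 : R) < m%:R by rewrite ltr0n; apply: leq_trans m2.
have EK : (4 * c1 * eps * Num.sqrt (2 * L)) ^+ 2 / (eps ^+ 2 * 4) = 8 * c1 ^+ 2 * L.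
  rewrite !exprMn sqr_sqrtr; last lra.
  by field; rewrite gt_eqF // exprn_gt0.
rewrite mulNr EK.
have -> : 8 * c1 ^+ 2 * L = L + (8 * c1 ^+ 2 - 1) * L by ring.
rewrite expRN expRD lnK ?posrE //.
set y := (8 * c1 ^+ 2 - 1) * L.
have hy := expR_ge1Dx y.
have ey := expR_gt0 y.
have y0 : (8 * c1 ^+ 2 - 1) / 2 <= y.
  rewrite /y; have : 0 <= 8 * c1 ^+ 2 - 1 by rewrite expr2; nra.
  move=> h; have := ler_wpM2l h L2.
  have -> : (8 * c1 ^+ 2 - 1) * (1 / 2) = (8 * c1 ^+ 2 - 1) / 2 by rewrite mul1r.
  by [].
have s2 := sqrt2_le2.
have s0 : 0 <= Num.sqrt (2 : R) by exact: sqrtr_ge0.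
have -> : m%:R * (Num.sqrt 2 * (m%:R * expR y)^-1) = Num.sqrt 2 / expR y.
  by field; rewrite !gt_eqF.
have c0 : 0 < c1 by lra.
rewrite ler_pdivrMr // mulrC ler_pdivlMr //.
have : Num.sqrt 2 * c1 <= 2 * c1 by rewrite ler_wpM2r //; lra.
have : 2 * c1 <= expR y.
  suff : 2 * c1 <= 1 + y by lra.
  move: y0; rewrite expr2; nra.
lra.
Qed.

End Num.

Unset Implicit Arguments. Set Strict Implicit.

Theorem lemma18 (R : realType) (m d i : nat) (eps_a c1 : R)
  (dd : measure_display) (T : measurableType dd) (P : probability T R)
  (a bb : 'I_m -> T -> R) (wb : 'I_m -> 'I_(i + 1) -> T -> R) :
  (2 <= m)%N -> 0 < eps_a -> 10 < c1 -> (1 <= i)%N ->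
  forall hid : (i <= d)%N,
  (forall r, is_normal_rv P (a r) 0 eps_a) ->
  (forall r, is_normal_rv P (bb r) 0 (Num.sqrt (m%:R^-1))) ->
  (forall r k, is_normal_rv P (wb r k) 0 (Num.sqrt (m%:R^-1))) ->
  mutually_independent P (init_family a bb wb) ->
  forall (B : R) (n t : nat) (x : 'I_n -> 'rV[R]_d),
  0 < B -> (1 <= n)%N -> (1 <= t)%N ->
  (forall j, norm2 (x j) <= 1) ->
  exists E : set T, measurable E /\
    ((1 - c1^-1)%:E <= P E)%E /\
    forall om, E om ->
      n%:R^-1 *
        rad_sum (fun r => a r om) (fun r => \row_(k < i + 1) wb r k om)
          (fun r => bb r om) B (fun j => xprefix hid (x j))
      <= 8 * c1 * eps_a * B * m%:R * Num.sqrt (2 * ln m%:R) / Num.sqrt n%:R.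
Proof.
move=> m2 e0 c10 i1 hid ha _ _ _ B n t x B0 n1 _ hx.
set K := 4 * c1 * eps_a * Num.sqrt (2 * ln (m%:R : R)).
have K0 : 0 <= K.
  by rewrite /K !mulr_ge0 ?sqrtr_ge0 // ltW //; lra.
have [E [mE [PE hE]]] := event_bound ha e0 K0.
exists E; split => //; split.
  apply: le_trans PE; rewrite lee_fin lerD2l lerN2.
  exact: numeric.
move=> om Eom.
have hX j : norm2 (xhat (xprefix hid (x j))) <= 1.
  exact: norm2_xhat (le_trans (norm2_prefix hid (x j)) (hx j)).
have H := det_bound (fun r => a r om) (fun r => \row_(k < i + 1) wb r k om)
  (fun r => bb r om) n1 (ltW B0) hX.
have n0 : (0 : R) < n%:R by rewrite ltr0n.
apply: le_trans (ler_wpM2l _ H) _; first by rewrite invr_ge0 ltW.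
have H2 : \sum_r `|a r om| * (2 * B * Num.sqrt n%:R) <= \sum_(r < m) K * (2 * B * Num.sqrt n%:R).
  apply: ler_sum => r _; rewrite ler_wpM2r ?hE //.
  by rewrite !mulr_ge0 ?sqrtr_ge0 // ltW.
apply: le_trans (ler_wpM2l _ H2) _; first by rewrite invr_ge0 ltW.
rewrite sumr_const card_ord /K.
set sn := Num.sqrt (n%:R : R).
have sn0 : 0 < sn by rewrite sqrtr_gt0.
have nE : (n%:R : R) = sn ^+ 2 by rewrite sqr_sqrtr // ltW.
rewrite [in X in X * _]nE -mulr_natl.
rewrite le_eqVlt; apply/orP; left; apply/eqP.
field; rewrite gt_eqF //.
Qed.
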